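(* Let $b\ge0$ be a constant and assume (A1) and (A2). Let $\tilde M=\phi_{\max}\psi_{\max}\big[2+\big(b\max\{\sqrt{d_1}\theta_{\max},\sqrt{d_2}\gamma_{\max}\}/\sqrt2+\sqrt{d_1d_2}\gamma_{\max}\theta_{\max}\big)\phi_{\max}\psi_{\max}\big]$. For any realization of the data with $y_i\in\{0,1\}$: when $\|\theta-\theta_*\|_2\le b/\sqrt2$, for all $\gamma\in\mathbb{R}^{d_2}$ and $\gamma'\in\Gamma$, $$\|\nabla_\theta L_n(\theta,\gamma)-\nabla_\theta L_n(\theta,\gamma')\|_2\le\tilde M\|\gamma-\gamma'\|_2;$$ when $\|\gamma-\gamma_*\|_2\le b/\sqrt2$, for all $\theta\in\mathbb{R}^{d_1}$ and $\theta'\in\Theta$, $$\|\nabla_\gamma L_n(\theta,\gamma)-\nabla_\gamma L_n(\theta',\gamma)\|_2\le\tilde M\|\theta-\theta'\|_2.$$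
   Context: Data $(x_i,s_i,a_i^{(0)},a_i^{(1)},y_i)$, $i=1,\dots,n$, with $y_i\in\{0,1\}$. Known feature maps $\phi$ ($\mathbb{R}^{d_1}$-valued), $\psi_0$ (real), $\psi$ ($\mathbb{R}^{d_2}$-valued). $\sigma_\gamma(x)=\psi_0(x)+\gamma^\top\psi(x)$, $z_i=\phi(s_i,a_i^{(1)})-\phi(s_i,a_i^{(0)})$, $\mu(v)=1/(1+e^{-v})$, $L_n(\theta,\gamma)=-\frac1n\sum_i\{y_i\log\mu(\sigma_\gamma(x_i)\theta^\top z_i)+(1-y_i)\log[1-\mu(\sigma_\gamma(x_i)\theta^\top z_i)]\}$. (A1): $\|\phi(s,a)\|_2\le\phi_{\max}$; the true parameter $\theta_*\in\Theta=\{\theta:\|\theta\|_\infty\le\theta_{\max}\}$. (A2): $\psi_0\not\equiv0$; $\sup_x\|(\psi_0(x),\psi(x)^\top)\|_2\le\psi_{\max}$; the true $\gamma_*\in\Gamma=\{\gamma:\|(1,\gamma^\top)\|_\infty\le\gamma_{\max}\}$. *)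

(* Defs.v *)
From HB Require Import structures.
From mathcomp Require Import all_boot all_order all_algebra.
From mathcomp Require Import all_classical all_reals all_analysis.
Set Implicit Arguments. Unset Strict Implicit. Unset Printing Implicit Defensive.
Import Order.TTheory GRing.Theory Num.Theory.
Import numFieldNormedType.Exports.
Local Open Scope ring_scope.

Definition dotv {R : realType} {d : nat} (u v : 'rV[R]_d) : R :=
  \sum_(j < d) u 0 j * v 0 j.
Definition norm2 {R : realType} {d : nat} (v : 'rV[R]_d) : R :=
  Num.sqrt (\sum_(j < d) v 0 j ^+ 2).

Definition logistic {R : realType} (v : R) : R := 1 / (1 + expR (- v)).

Definition sigmaG {R : realType} {X : Type} {d2 : nat}
  (psi0 : X -> R) (psi : X -> 'rV[R]_d2) (g : 'rV[R]_d2) (x : X) : R :=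
  psi0 x + dotv g (psi x).

Definition zvec {R : realType} {S A : Type} {d1 : nat}
  (phi : S -> A -> 'rV[R]_d1) (s : S) (a0 a1 : A) : 'rV[R]_d1 :=
  phi s a1 - phi s a0.

Definition Ln {R : realType} {X S A : Type} {d1 d2 n : nat}
  (phi : S -> A -> 'rV[R]_d1) (psi0 : X -> R) (psi : X -> 'rV[R]_d2)
  (x : 'I_n -> X) (s : 'I_n -> S) (a0 a1 : 'I_n -> A) (y : 'I_n -> R)
  (th : 'rV[R]_d1) (g : 'rV[R]_d2) : R :=
  - (n%:R)^-1 * \sum_(i < n)
      (let u := sigmaG psi0 psi g (x i) * dotv th (zvec phi (s i) (a0 i) (a1 i)) in
       y i * ln (logistic u) + (1 - y i) * ln (1 - logistic u)).

Definition grad {R : realType} {d : nat} (f : 'rV[R]_d -> R) (v : 'rV[R]_d)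
  : 'rV[R]_d :=
  \row_(j < d) derive f v (delta_mx 0 j).

(* Main.v *)
Require Import Defs.
From HB Require Import structures.
From mathcomp Require Import all_boot all_order all_algebra.
From mathcomp Require Import all_classical all_reals all_analysis.
From mathcomp Require Import ring lra.
Import Order.TTheory GRing.Theory Num.Theory.
Import numFieldNormedType.Exports.
Local Open Scope classical_set_scope.
Local Open Scope ring_scope.



Section Logi.
Variable R : realType.
Local Notation mu := (@logistic R).

Lemma muE (v : R) : mu v = (1 + expR (- v))^-1.
Proof. by rewrite /logistic div1r. Qed.

Lemma mu_gt0 (v : R) : 0 < mu v.
Proof. by rewrite muE invr_gt0 addr_gt0 // expR_gt0. Qed.

Lemma mu_lt1 (v : R) : mu v < 1.
Proof.
rewrite muE invf_lt1; last by rewrite addr_gt0 // expR_gt0.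
by rewrite ltrDl expR_gt0.
Qed.

Lemma muN (v : R) : mu (- v) = 1 - mu v.
Proof.
rewrite !muE opprK expRN.
have h : 0 < expR v := expR_gt0 v.
field; rewrite !lt0r_neq0 // addr_gt0.
Qed.

Lemma is_derive_mu (v : R) : is_derive v 1 mu (mu v * (1 - mu v)).
Proof.
have -> : mu = (fun x => (1 + expR (- x))^-1) by apply/funext => x; rewrite muE.
have h1 : is_derive v 1 (fun x : R => 1 + expR (- x)) (- expR (- v)).
  have -> : (fun x : R => 1 + expR (- x)) = cst 1 + (expR \o -%R).
    by apply/funext => x.
  apply: is_derive_eq.
  by rewrite add0r mulrN1.
have hne : 1 + expR (- v) != 0 by rewrite lt0r_neq0 // addr_gt0 // expR_gt0.
have h2 := @is_deriveV R (fun x => 1 + expR (- x)) v _ 1 hne h1. apply: is_derive_eq.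
have ha : 0 < expR (- v) := expR_gt0 _.
set a := expR (- v) in hne ha *.
rewrite -[_ *: _]/(_ * _).
field; exact: hne.
Qed.


Lemma mu_mul (x : R) : mu x * (1 + expR (- x)) = 1.
Proof. by rewrite muE mulVf // lt0r_neq0 // addr_gt0 // expR_gt0. Qed.

Lemma mu0 : mu 0 = 1 / 2.
Proof. by rewrite muE oppr0 expR0 div1r. Qed.

Lemma mu_le (x y : R) : x <= y -> mu x <= mu y.
Proof.
move=> xy.
have e1 : expR (- y) <= expR (- x) by rewrite ler_expR lerN2.
have := mu_mul x; have := mu_mul y.
have := mu_gt0 x; have := mu_gt0 y; have := expR_gt0 (- y).
nra.
Qed.

Lemma mu_ge_half (x : R) : 0 <= x -> 1 / 2 <= mu x.
Proof. by move=> x0; rewrite -mu0; apply: mu_le. Qed.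

Definition Fh (v : R) := mu v + v * (mu v * (1 - mu v)).

Lemma is_derive_h (v : R) : is_derive v 1 (fun x => x * mu x) (Fh v).
Proof.
have -> : (fun x => x * mu x) = (id : R -> R) * mu by apply/funext.
have H := is_deriveM (is_derive_id v 1) (is_derive_mu v).
apply: (is_derive_eq H).
by rewrite /Fh -[_ *: _]/(_ * _) -[_%:A]/(_ * 1) mulr1 addrC.
Qed.

Lemma cont_of_deriv (f df : R -> R) (a b : R) :
  (forall x : R, is_derive x 1 f (df x)) -> {within `[a, b], continuous f}.
Proof.
move=> hd; apply/continuous_subspaceT => r.
apply/differentiable_continuous/derivable1_diffP.
by have [] := hd r.
Qed.

Lemma mvt (f df : R -> R) (a b : R) : a < b ->
  (forall x : R, is_derive x 1 f (df x)) ->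
  exists2 c, a < c < b & f b - f a = df c * (b - a).
Proof.
move=> ab hd.
have [c cab eq] := MVT ab (fun x _ => hd x) (cont_of_deriv f df a b hd).
by exists c => //; move: cab; rewrite in_itv.
Qed.

Lemma factA (x : R) : -1 <= Fh x.
Proof.
rewrite /Fh.
have m0 := mu_gt0 x; have m1 := mu_lt1 x.
have [x0|x0] := lerP 0 x.
  have h1 : 0 <= mu x * (1 - mu x) by nra.
  have : 0 <= x * (mu x * (1 - mu x)) by nra.
  lra.
have e := expR_ge1Dx (- x).
have mm := mu_mul x.
have hx : -1 <= x * mu x by nra.
nra.
Qed.

Lemma factB (x : R) : x <= 1 -> Fh x <= 1.
Proof.
move=> x1; rewrite /Fh.
have m0 := mu_gt0 x; have m1 := mu_lt1 x.
have hx : x * mu x <= 1.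
  have [x0|x0] := lerP 0 x; nra.
nra.
Qed.

Lemma exp_sq (x : R) : 0 <= x -> (1 + x / 2) ^+ 2 <= expR x.
Proof.
move=> x0.
have -> : expR x = expR (x / 2) ^+ 2 by rewrite expr2 -expRD; congr expR; field.
have h := expR_ge1Dx (x / 2).
rewrite lerXn2r // ?nnegrE // ?expR_ge0 //; lra.
Qed.

Lemma factC (x : R) : 1 < x -> Fh x <= 1 + x / 6.
Proof.
move=> x1; rewrite /Fh.
have m0 := mu_gt0 x; have m1 := mu_lt1 x.
have e := exp_sq x (ltW (lt_trans ltr01 x1)).
have r : (1 - mu x) * (1 + expR x) = 1.
  by rewrite -muN; have := mu_mul (- x); rewrite opprK.
have hx : x * mu x - 1 <= x - 1 by nra.
have e0 : 0 < expR x := expR_gt0 x.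
nra.
Qed.

Lemma factK (v w : R) : 0 < v -> v < w ->
  v * (mu w - 1 / 2) <= w * (mu v - 1 / 2).
Proof.
move=> v0 vw.
have [c1 /andP[c10 c1v] e1] := mvt mu (fun x => mu x * (1 - mu x)) 0 v v0 is_derive_mu.
have [c2 /andP[c2v c2w] e2] := mvt mu (fun x => mu x * (1 - mu x)) v w vw is_derive_mu.
rewrite mu0 subr0 in e1.
have h1 : mu c1 <= mu c2 by apply: mu_le; lra.
have h2 : 1 / 2 <= mu c1 by apply: mu_ge_half; lra.
set m1 := mu c1 in h1 h2 e1; set m2 := mu c2 in h1 e2.
have hd : m2 * (1 - m2) <= m1 * (1 - m1) by nra.
have hv : 0 <= v * (w - v) by nra.
have : 0 <= v * (w - v) * (m1 * (1 - m1) - m2 * (1 - m2)) by apply: mulr_ge0 => //; lra.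
nra.
Qed.

Lemma expRm2 : 1 / 9 <= expR (- 2) :> R.
Proof.
have -> : (- 2 : R) = 12%:R * (- (1 / 6)) by rewrite mulrN; congr (- _); field.
rewrite expRM_natl.
have h := expR_ge1Dx (- (1 / 6) : R).
have h0 : 0 <= 1 + - (1 / 6) :> R by lra.
have h1 : (1 + - (1 / 6)) ^+ 12 <= expR (- (1 / 6)) ^+ 12 :> R.
  by rewrite lerXn2r // ?nnegrE // ?expR_ge0.
apply: le_trans h1.
rewrite !exprS expr0.
lra.
Qed.

Lemma factM (u : R) : 0 <= u -> mu u <= 3 / 4 + u / 12.
Proof.
move=> u0.
have m1 := mu_lt1 u.
have [u3|u3] := lerP 3 u; first lra.
have ea : expR (- u) = expR (- 2) * expR (2 - u) by rewrite -expRD; congr expR; ring.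
have e1 := expR_ge1Dx (2 - u).
have e2 := expRm2.
have e3 : 0 < expR (2 - u) := expR_gt0 _.
have a1 : (3 - u) / 9 <= expR (- u) by rewrite ea; nra.
have mm := mu_mul u.
have m0 := mu_gt0 u.
nra.
Qed.

Lemma SL (u u' : R) :
  `|u * mu u - u' * mu u'| <= `|u - u'| * (1 + `|u'| / 6).
Proof.
have hd := is_derive_h.
have [uu|uu|->] := ltgtP u u'; last by rewrite !subrr normr0 mul0r.
- have [c /andP[c1 c2] e] := mvt (fun x => x * mu x) Fh u u' uu hd.
  rewrite distrC e (distrC u) normrM [`|u' - u|]gtr0_norm ?subr_gt0 // mulrC.
  apply: ler_wpM2l; first by rewrite subr_ge0 ltW.
  have hA := factA c.
  have hF : Fh c <= 1 + `|u'| / 6.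
    have [c1'|c1'] := lerP c 1.
      have := factB c c1'; have : 0 <= `|u'| / 6 by rewrite divr_ge0.
      lra.
    have := factC c c1'; rewrite ger0_norm; last lra.
    lra.
  have n0 : 0 <= `|u'| / 6 by rewrite divr_ge0.
  rewrite ler_norml; apply/andP; split; lra.
- have [c /andP[c1 c2] e] := mvt (fun x => x * mu x) Fh u' u uu hd.
  rewrite [`|u - u'|]gtr0_norm ?subr_gt0 //.
  have hA := factA c.
  have n0 : 0 <= `|u'| / 6 by rewrite divr_ge0.
  rewrite ler_norml; apply/andP; split.
    rewrite e; nra.
  have [c1'|c1'] := lerP c 1.
    rewrite e; have := factB c c1'; nra.
  have m0 := mu_gt0 u; have m1 := mu_lt1 u.
  have m0' := mu_gt0 u'; have m1' := mu_lt1 u'.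
  have [u'0|u'0] := lerP u' 0.
    nra.
  rewrite ger0_norm; last lra.
  have hK := factK u' u u'0 uu.
  have hM := factM u (ltW (lt_trans u'0 uu)).
  have hu : 0 < u by lra.
  suff : u * (u * mu u - u' * mu u') <= u * ((u - u') * (1 + u' / 6)).
    by rewrite ler_pM2l.
  have hmain : u * (mu u - mu u') <= (u - u') * (mu u - 1 / 2) by nra.
  have step : u * (u * mu u - u' * mu u') <=
     u * (u - u') * mu u + u' * ((u - u') * (mu u - 1 / 2)).
    have -> : u * (u * mu u - u' * mu u') =
      u * (u - u') * mu u + u' * (u * (mu u - mu u')) by ring.
    rewrite lerD2l; apply: ler_wpM2l; lra.
  apply: le_trans step _.
  have hdu : 0 < u - u' by lra.
  suff : u * mu u + u' * (mu u - 1 / 2) <= u * (1 + u' / 6) by nra.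
  have [t|t] := lerP (mu u - 1 / 2 - u / 6) 0; nra.
Qed.
End Logi.

Lemma SLy (R : realType) (y a a' c : R) : y = 0 \/ y = 1 ->
  `|(y - logistic (a * c)) * a - (y - logistic (a' * c)) * a'|
    <= `|a - a'| * (1 + `|a'| * `|c| / 6).
Proof.
move=> hy.
have [->|c0] := eqVneq c 0.
  rewrite !mulr0 mu0 normr0 mulr0 mul0r addr0 mulr1 -mulrBr normrM mulrC.
  rewrite ler_piMr //.
  by case: hy => ->; rewrite ?sub0r ?normrN ger0_norm; lra.
have cp : 0 < `|c| by rewrite normr_gt0.
rewrite -(ler_pM2r cp) -normrM.
have key : `|a * c - a' * c| * (1 + `|a' * c| / 6) =
   `|a - a'| * (1 + `|a'| * `|c| / 6) * `|c|.
  by rewrite -mulrBl !normrM; ring.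
rewrite -key.
case: hy => ->.
- have := SL _ (a * c) (a' * c).
  have -> : a * c * logistic (a * c) - a' * c * logistic (a' * c) =
     - (((0 - logistic (a * c)) * a - (0 - logistic (a' * c)) * a') * c) by ring.
  by rewrite normrN.
- have := SL _ (- (a * c)) (- (a' * c)).
  rewrite !muN normrN.
  have -> : - (a * c) - - (a' * c) = - (a * c - a' * c) by ring.
  rewrite normrN.
  have -> : - (a * c) * (1 - logistic (a * c)) - - (a' * c) * (1 - logistic (a' * c))
     = - (((1 - logistic (a * c)) * a - (1 - logistic (a' * c)) * a') * c) by ring.
  by rewrite normrN.
Qed.



Section Vec.
Variable R : realType.

Lemma CS d (a b : 'I_d -> R) :
  (\sum_(k < d) a k * b k) ^+ 2 <= (\sum_(k < d) a k ^+ 2) * (\sum_(k < d) b k ^+ 2).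
Proof.
set A := \sum_(k < d) a k ^+ 2; set B := \sum_(k < d) b k ^+ 2.
set C := \sum_(k < d) a k * b k.
have A0 : 0 <= A by apply: sumr_ge0 => k _; exact: sqr_ge0.
have B0 : 0 <= B by apply: sumr_ge0 => k _; exact: sqr_ge0.
have key : 0 <= \sum_(k < d) (A * b k - C * a k) ^+ 2.
  by apply: sumr_ge0 => k _; exact: sqr_ge0.
have e : \sum_(k < d) (A * b k - C * a k) ^+ 2 = A * (A * B - C ^+ 2).
  rewrite (eq_bigr (fun k => A ^+ 2 * b k ^+ 2 - (2 * A * C) * (a k * b k) + C ^+ 2 * a k ^+ 2));
    last by move=> k _; ring.
  rewrite big_split /= sumrB -!mulr_sumr -/A -/B -/C; ring.
rewrite e in key.
have [A00|Ap] := eqVneq A 0.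
  have ha : forall k, a k = 0.
    move=> k; apply/eqP; rewrite -sqrf_eq0; apply/eqP.
    have := A00; rewrite /A => /eqP; rewrite psumr_eq0 => [/allP h|k' _]; last exact: sqr_ge0.
    by apply/eqP; apply: h; rewrite mem_index_enum.
  have -> : C = 0 by rewrite /C big1 // => k _; rewrite ha mul0r.
  by rewrite expr0n /= mulr_ge0.
have Ap' : 0 < A by rewrite lt_def Ap A0.
by move: key; rewrite pmulr_rge0 // subr_ge0 mulrC.
Qed.


Section N2.
Variable d : nat.
Implicit Types u v : 'rV[R]_d.

Lemma sumsq_ge0 v : 0 <= \sum_(j < d) v 0 j ^+ 2.
Proof. by apply: sumr_ge0 => k _; exact: sqr_ge0. Qed.

Lemma norm2_ge0 v : 0 <= norm2 v.
Proof. exact: sqrtr_ge0. Qed.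

Lemma norm2_sq v : norm2 v ^+ 2 = \sum_(j < d) v 0 j ^+ 2.
Proof. by rewrite /norm2 sqr_sqrtr // sumsq_ge0. Qed.

Lemma dot_CS u v : `|dotv u v| <= norm2 u * norm2 v.
Proof.
rewrite /dotv /norm2 -sqrtr_sqr -sqrtrM ?sumsq_ge0 // ler_sqrt; last first.
  by rewrite mulr_ge0 // sumsq_ge0.
exact: CS.
Qed.

Lemma dotvC u v : dotv u v = dotv v u.
Proof. by apply: eq_bigr => j _; rewrite mulrC. Qed.

Lemma dotvBl u v w : dotv (u - v) w = dotv u w - dotv v w.
Proof.
rewrite /dotv -sumrB; apply: eq_bigr => j _.
by rewrite !mxE mulrBl.
Qed.

Lemma dotv_line u z (h : R) (j : 'I_d) :
  dotv (h *: delta_mx 0 j + u) z = dotv u z + h * z 0 j.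
Proof.
rewrite /dotv (eq_bigr (fun k => u 0 k * z 0 k + h * (delta_mx 0 j : 'rV[R]_d) 0 k * z 0 k));
  last by move=> k _; rewrite !mxE; ring.
rewrite big_split /=; congr (_ + _).
rewrite (bigD1 j) //= big1; last first.
  by move=> k kj; rewrite mxE eqxx /= (negbTE kj) mulr0 mul0r.
by rewrite mxE !eqxx addr0 mulr1.
Qed.

Lemma norm2_scale (a : R) v : norm2 (a *: v) = `|a| * norm2 v.
Proof.
rewrite /norm2 (eq_bigr (fun j => a ^+ 2 * v 0 j ^+ 2)); last first.
  by move=> j _; rewrite mxE exprMn.
by rewrite -mulr_sumr sqrtrM ?sqr_ge0 // sqrtr_sqr.
Qed.

Lemma norm2_opp v : norm2 (- v) = norm2 v.
Proof. by rewrite -scaleN1r norm2_scale normrN normr1 mul1r. Qed.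

Lemma norm2_add u v : norm2 (u + v) <= norm2 u + norm2 v.
Proof.
have h0 : 0 <= norm2 u + norm2 v by rewrite addr_ge0 // norm2_ge0.
rewrite -(ger0_norm h0) -sqrtr_sqr /norm2 ler_sqrt ?sqr_ge0 //.
have e : \sum_(j < d) (u + v) 0 j ^+ 2 =
   \sum_(j < d) u 0 j ^+ 2 + 2 * dotv u v + \sum_(j < d) v 0 j ^+ 2.
  rewrite /dotv mulr_sumr -!big_split /=; apply: eq_bigr => j _.
  by rewrite mxE; ring.
rewrite e -!norm2_sq.
have hcs := dot_CS u v.
have : dotv u v <= `|dotv u v| := ler_norm _.
rewrite !sqrtr_sqr (ger0_norm (norm2_ge0 u)) (ger0_norm (norm2_ge0 v)) sqrrD -mulr_natr.
move=> hle; lra.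
Qed.

Lemma norm2_sum n (F : 'I_n -> 'rV[R]_d) :
  norm2 (\sum_(i < n) F i) <= \sum_(i < n) norm2 (F i).
Proof.
apply: (big_ind2 (fun x y => norm2 x <= y)).
- by rewrite /norm2 big1 ?sqrtr0 // => j _; rewrite mxE expr0n.
- by move=> x1 x2 y1 y2 h1 h2; apply: le_trans (norm2_add _ _) _; exact: lerD.
- by [].
Qed.

Lemma norm2_bound v (m : R) : (forall j, `|v 0 j| <= m) ->
  norm2 v <= Num.sqrt d%:R * m.
Proof.
move=> hv.
have hm : d = 0%N \/ 0 <= m.
  case: d v hv => [|d'] v hv; [by left|right].
  exact: le_trans (normr_ge0 _) (hv ord0).
have h0 : 0 <= Num.sqrt d%:R * m.
  by case: hm => [->|m0]; rewrite ?sqrtr0 ?mul0r // mulr_ge0 // sqrtr_ge0.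
rewrite -(ger0_norm h0) -sqrtr_sqr /norm2 ler_sqrt ?sqr_ge0 //.
rewrite exprMn sqr_sqrtr ?ler0n //.
have -> : d%:R * m ^+ 2 = \sum_(j < d) m ^+ 2 :> R.
  by rewrite sumr_const card_ord mulr_natl.
apply: ler_sum => j _.
rewrite -real_normK ?num_real //.
rewrite ler_sqr ?nnegrE //; last by apply: le_trans (hv j).
Qed.
End N2.
End Vec.



Section Der.
Variable R : realType.
Local Notation mu := (@logistic R).

Definition ell (y u : R) := y * ln (mu u) + (1 - y) * ln (1 - mu u).

Lemma is_derive_ell (y u : R) : is_derive u 1 (ell y) (y - mu u).
Proof.
have m0 := mu_gt0 _ u; have m1 := mu_lt1 _ u.
have d1 : is_derive u 1 ((@ln R) \o mu) ((mu u)^-1 * (mu u * (1 - mu u))).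
  apply: is_derive1_comp; last exact: is_derive_mu _ u.
  exact: is_derive1_ln.
have d2' : is_derive u 1 (fun t => 1 - mu t) (- (mu u * (1 - mu u))).
  have -> : (fun t => 1 - mu t) = cst 1 - mu by apply/funext.
  have H := (is_deriveB (is_derive_cst (1:R) u 1) (is_derive_mu _ u)).
  by rewrite sub0r in H.
have d2 : is_derive u 1 ((@ln R) \o (fun t => 1 - mu t)) ((1 - mu u)^-1 * - (mu u * (1 - mu u))).
  have p : 0 < 1 - mu u by lra.
  exact: (@is_derive1_comp _ (@ln R) (fun t => 1 - mu t) u _ _ (is_derive1_ln p) d2').
have -> : ell y = (fun t => y * ((@ln R) \o mu) t + (1 - y) * ((@ln R) \o (fun t => 1 - mu t)) t).
  by apply/funext.
have -> : (fun t => y * ((@ln R) \o mu) t + (1 - y) * ((@ln R) \o (fun t => 1 - mu t)) t) =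
   (y \*: ((@ln R) \o mu)) + ((1 - y) \*: ((@ln R) \o (fun t => 1 - mu t))) by apply/funext.
have H := (is_deriveD (is_deriveZ y d1) (is_deriveZ (1 - y) d2)).
apply: (is_derive_eq H).
rewrite -[y *: _]/(y * _) -[(1 - y) *: _]/((1 - y) * _).
field; apply/andP; split; apply: lt0r_neq0; lra.
Qed.


Lemma is_derive_line_term (y A B : R) :
  is_derive (0 : R) 1 (fun h : R => ell y (A + h * B)) ((y - mu A) * B).
Proof.
have dg : is_derive (0 : R) 1 (fun h : R => A + h * B) B.
  have -> : (fun h : R => A + h * B) = cst A + (B \*: id) by apply/funext => h /=; rewrite mulrC.
  have H := is_deriveD (is_derive_cst A (0:R) 1) (is_deriveZ B (is_derive_id (0:R) (1:R))).
  apply: (is_derive_eq H).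
  by rewrite add0r -[B *: 1]/(B * 1) mulr1.
have H := @is_derive1_comp _ (ell y) (fun h : R => A + h * B) 0 _ _ (is_derive_ell y (A + 0 * B)) dg.
rewrite mul0r addr0 in H.
exact: H.
Qed.

Lemma derive_sumform n (c : R) (y A B : 'I_n -> R) :
  derive (fun h : R => c * \sum_(i < n) ell (y i) (A i + h * B i)) 0 1
  = c * \sum_(i < n) (y i - mu (A i)) * B i.
Proof.
have -> : (fun h : R => c * \sum_(i < n) ell (y i) (A i + h * B i)) =
   c \*: \sum_(i < n) (fun h : R => ell (y i) (A i + h * B i)).
  by apply/funext => h /=; rewrite fct_sumE.
have H := is_deriveZ c (is_derive_sum (fun i => is_derive_line_term (y i) (A i) (B i))).
by rewrite derive_val.
Qed.

Lemma derive_line d (f : 'rV[R]_d -> R) (v e : 'rV[R]_d) :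
  derive f v e = derive (fun h : R => f (h *: e + v)) 0 1.
Proof.
rewrite /derive.
have -> : (fun h0 : R => h0^-1 *: ((fun h : R => f (h *: e + v)) (h0 *: 1 + 0) - (fun h : R => f (h *: e + v)) 0))
  = (fun h0 : R => h0^-1 *: (f (h0 *: e + v) - f v)).
  by apply/funext => h /=; rewrite scale0r add0r addr0 -[h *: 1]/(h * 1) mulr1.
by [].
Qed.
End Der.



Section Grad.
Variables (R : realType) (X S A : Type) (d1 d2 n : nat)
  (phi : S -> A -> 'rV[R]_d1) (psi0 : X -> R) (psi : X -> 'rV[R]_d2)
  (x : 'I_n -> X) (s : 'I_n -> S) (a0 a1 : 'I_n -> A) (y : 'I_n -> R).
Local Notation mu := (@logistic R).
Local Notation L := (Ln phi psi0 psi x s a0 a1 y).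
Local Notation z i := (zvec phi (s i) (a0 i) (a1 i)).
Local Notation sg g i := (sigmaG psi0 psi g (x i)).

Lemma grad_theta (th : 'rV[R]_d1) (g : 'rV[R]_d2) :
  grad (fun t => L t g) th =
  \row_j (- (n%:R)^-1 * \sum_(i < n) (y i - mu (sg g i * dotv th (z i))) * (sg g i * z i 0 j)).
Proof.
apply/matrixP => i0 j; rewrite !mxE derive_line.
have -> : (fun h : R => L (h *: delta_mx 0 j + th) g) =
  (fun h : R => - (n%:R)^-1 * \sum_(i < n) ell _ (y i)
      ((fun i => sg g i * dotv th (z i)) i + h * (fun i => sg g i * z i 0 j) i)).
  apply/funext => h.
  rewrite /Ln; congr (_ * _); apply: eq_bigr => i _ /=.
  rewrite /ell dotv_line.
  by have -> : sg g i * (dotv th (z i) + h * z i 0 j) =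
    sg g i * dotv th (z i) + h * (sg g i * z i 0 j) by ring.
by rewrite derive_sumform.
Qed.

Lemma grad_gamma (th : 'rV[R]_d1) (g : 'rV[R]_d2) :
  grad (L th) g =
  \row_j (- (n%:R)^-1 * \sum_(i < n) (y i - mu (sg g i * dotv th (z i))) * (psi (x i) 0 j * dotv th (z i))).
Proof.
apply/matrixP => i0 j; rewrite !mxE derive_line.
have -> : (fun h : R => L th (h *: delta_mx 0 j + g)) =
  (fun h : R => - (n%:R)^-1 * \sum_(i < n) ell _ (y i)
      ((fun i => sg g i * dotv th (z i)) i + h * (fun i => psi (x i) 0 j * dotv th (z i)) i)).
  apply/funext => h.
  rewrite /Ln; congr (_ * _); apply: eq_bigr => i _ /=.
  rewrite /ell /sigmaG dotv_line.
  by have -> : (psi0 (x i) + (dotv g (psi (x i)) + h * psi (x i) 0 j)) * dotv th (z i) =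
    (psi0 (x i) + dotv g (psi (x i))) * dotv th (z i) + h * (psi (x i) 0 j * dotv th (z i)) by ring.
by rewrite derive_sumform.
Qed.
End Grad.



Section Fin.
Variable R : realType.

Lemma fin1 (Ph Ps P P0 Z T G E D : R) :
 0 <= Ph -> 0 <= P -> 0 <= P0 -> P0 ^+ 2 + P ^+ 2 <= Ps ^+ 2 -> 0 <= Ps ->
 0 <= Z -> Z <= 2 * Ph -> 0 <= T -> 0 <= G ->
 (P = 0 \/ T * (1 + 2 * G) / 3 <= E) -> 0 <= E -> 0 <= D ->
 D * P * (1 + (P0 + G * P) * (T * Z) / 6) * Z <= Ph * Ps * (2 + E * Ph * Ps) * D.
Proof.
move=> Ph0 P0' P00 hP Ps0 Z0 Z2 T0 G0 hE E0 D0.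
have M0 : 0 <= Ph * Ps * (2 + E * Ph * Ps).
  by rewrite !mulr_ge0 // addr_ge0 // !mulr_ge0.
case: hE => [->|hE]; first by rewrite mulr0 !mul0r mulr_ge0.
suff h : P * (1 + (P0 + G * P) * (T * Z) / 6) * Z <= Ph * Ps * (2 + E * Ph * Ps).
  have -> : D * P * (1 + (P0 + G * P) * (T * Z) / 6) * Z =
    D * (P * (1 + (P0 + G * P) * (T * Z) / 6) * Z) by ring.
  by rewrite [X in _ <= X]mulrC ler_wpM2l.
have hPs : P <= Ps by nra.
have h1 : P * Z <= 2 * Ph * Ps by nra.
have h2 : P * P0 <= Ps ^+ 2 / 2.
  have := sqr_ge0 (P - P0); rewrite sqrrB; lra.
have h3 : G * P ^+ 2 <= G * Ps ^+ 2 by apply: ler_wpM2l => //; nra.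
have h4 : (P0 + G * P) * P <= Ps ^+ 2 * (1 / 2 + G) by nra.
have h5 : Z ^+ 2 <= 4 * Ph ^+ 2 by nra.
have h40 : 0 <= (P0 + G * P) * P by nra.
have h6 : (P0 + G * P) * P * (T * Z ^+ 2) <= Ps ^+ 2 * (1 / 2 + G) * (T * (4 * Ph ^+ 2)).
  apply: ler_pM => //; first by nra.
  by apply: ler_wpM2l.
have h7 : Ps ^+ 2 * (1 / 2 + G) * (T * (4 * Ph ^+ 2)) / 6 <= Ph ^+ 2 * Ps ^+ 2 * E.
  have -> : Ps ^+ 2 * (1 / 2 + G) * (T * (4 * Ph ^+ 2)) / 6 =
     Ph ^+ 2 * Ps ^+ 2 * (T * (1 + 2 * G) / 3) by field.
  by apply: ler_wpM2l => //; nra.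
have -> : P * (1 + (P0 + G * P) * (T * Z) / 6) * Z =
   P * Z + (P0 + G * P) * P * (T * Z ^+ 2) / 6 by field.
have -> : Ph * Ps * (2 + E * Ph * Ps) = 2 * Ph * Ps + Ph ^+ 2 * Ps ^+ 2 * E by ring.
lra.
Qed.

Lemma avg_bound d n (c : 'I_n -> R) (V : 'I_n -> 'rV[R]_d) (K : R) : (0 < n)%N ->
  (forall i, `|c i| * norm2 (V i) <= K) ->
  norm2 (\row_j (- (n%:R)^-1 * \sum_(i < n) c i * V i 0 j)) <= K.
Proof.
move=> n0 hK.
have -> : \row_j (- (n%:R)^-1 * \sum_(i < n) c i * V i 0 j) =
   (- (n%:R)^-1) *: \sum_(i < n) c i *: V i.
  apply/matrixP => i j; rewrite !mxE; congr (_ * _); rewrite summxE.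
  by apply: eq_bigr => k _; rewrite !mxE (ord1 i).
have np : 0 < n%:R :> R by rewrite ltr0n.
rewrite (norm2_scale _ _ (- (n%:R)^-1) (\sum_(i < n) c i *: V i)) normrN ger0_norm ?invr_ge0 ?ler0n //.
have h : norm2 (\sum_(i < n) c i *: V i) <= n%:R * K.
  apply: le_trans (norm2_sum _ _ _ (fun i => c i *: V i)) _.
  have -> : n%:R * K = \sum_(i < n) K by rewrite sumr_const card_ord mulr_natl.
  by apply: ler_sum => i _; rewrite (norm2_scale _ _ (c i) (V i)).
rewrite ler_pdivrMl //.
Qed.
End Fin.



Lemma condE1 (R : realType) (B M s1t K T G : R) : 0 <= B -> 0 <= s1t -> 1 <= K -> K <= M ->
  0 <= T -> T <= B + s1t -> 0 <= G -> G <= K -> T * (1 + 2 * G) / 3 <= B * M + s1t * K.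
Proof.
move=> B0 s0 K1 KM T0 TB G0 GK.
have h1 : T * (1 + 2 * G) / 3 <= T * K by nra.
have h2 : T * K <= (B + s1t) * K by nra.
have h3 : B * K <= B * M by nra.
nra.
Qed.

Lemma condE2 (R : realType) (B M s1t K T H : R) : 0 <= B -> 0 <= s1t -> 1 <= K -> s1t <= M ->
  0 <= T -> T <= s1t -> 0 <= H -> H <= B + K -> K <= M -> T * (1 + 2 * H) / 3 <= B * M + s1t * K.
Proof.
move=> B0 s0 K1 sM T0 Ts H0 HB KM.
have h1 : T * (1 + 2 * H) <= s1t * (1 + 2 * H) by nra.
have h2 : s1t * (1 + 2 * H) <= s1t * (1 + 2 * B + 2 * K) by nra.
have h3 : s1t * B <= M * B by nra.
have h4 : s1t <= s1t * K by nra.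
have h5 : 0 <= M * B by nra.
nra.
Qed.

Lemma norm2_0 (R : realType) (v : 'rV[R]_0) : norm2 v = 0.
Proof. by rewrite /norm2 big_ord0 sqrtr0. Qed.

Theorem lemmaS5 (R : realType) (X S A : Type) (d1 d2 n : nat)
  (phi : S -> A -> 'rV[R]_d1) (psi0 : X -> R) (psi : X -> 'rV[R]_d2)
  (phi_max psi_max theta_max gamma_max b : R)
  (theta_star : 'rV[R]_d1) (gamma_star : 'rV[R]_d2)
  (x : 'I_n -> X) (s : 'I_n -> S) (a0 a1 : 'I_n -> A) (y : 'I_n -> R) :
  (0 < n)%N ->
  0 <= b ->
  (* (A1) *)
  (forall (s0 : S) (a : A), norm2 (phi s0 a) <= phi_max) ->
  (forall j, `|theta_star 0 j| <= theta_max) ->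
  (* (A2) *)
  (exists x0 : X, psi0 x0 != 0) ->
  (forall x0 : X, Num.sqrt (psi0 x0 ^+ 2 + \sum_(j < d2) psi x0 0 j ^+ 2) <= psi_max) ->
  (1 <= gamma_max /\ forall j, `|gamma_star 0 j| <= gamma_max) ->
  (* binary responses *)
  (forall i, y i = 0 \/ y i = 1) ->
  let L := Ln phi psi0 psi x s a0 a1 y in
  let Mt := phi_max * psi_max *
     (2 + (b * Num.max (Num.sqrt d1%:R * theta_max) (Num.sqrt d2%:R * gamma_max)
              / Num.sqrt 2
           + Num.sqrt (d1%:R * d2%:R) * gamma_max * theta_max) * phi_max * psi_max) in
  (forall theta : 'rV[R]_d1,
     norm2 (theta - theta_star) <= b / Num.sqrt 2 ->
     forall (g g' : 'rV[R]_d2),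
       (1 <= gamma_max /\ forall j, `|g' 0 j| <= gamma_max) ->
       norm2 (grad (fun t => L t g) theta - grad (fun t => L t g') theta)
         <= Mt * norm2 (g - g'))
  /\
  (forall g : 'rV[R]_d2,
     norm2 (g - gamma_star) <= b / Num.sqrt 2 ->
     forall (theta theta' : 'rV[R]_d1),
       (forall j, `|theta' 0 j| <= theta_max) ->
       norm2 (grad (L theta) g - grad (L theta') g)
         <= Mt * norm2 (theta - theta')).
Proof.
move=> n0 b0 hphi hths _ hpsi [gm1 hgs] hy L Mt.
pose i0 : 'I_n := Ordinal n0.
pose s1 : R := Num.sqrt d1%:R; pose s2 : R := Num.sqrt d2%:R.
pose M : R := Num.max (s1 * theta_max) (s2 * gamma_max).
pose B : R := b / Num.sqrt 2.
pose E : R := b * M / Num.sqrt 2 + Num.sqrt (d1%:R * d2%:R) * gamma_max * theta_max.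
have Mte : Mt = phi_max * psi_max * (2 + E * phi_max * psi_max) by [].
have Ph0 : 0 <= phi_max := le_trans (norm2_ge0 _ _ _) (hphi (s i0) (a0 i0)).
have Ps0 : 0 <= psi_max := le_trans (sqrtr_ge0 _) (hpsi (x i0)).
have s10 : 0 <= s1 by exact: sqrtr_ge0.
have s20 : 0 <= s2 by exact: sqrtr_ge0.
have sq20 : 0 < Num.sqrt 2 :> R by rewrite sqrtr_gt0.
have B0 : 0 <= B by rewrite divr_ge0 // ltW.
have s1t0 : 0 <= s1 * theta_max.
  have [d10|d1p] := posnP d1; first by rewrite /s1 d10 sqrtr0 mul0r.
  apply: mulr_ge0 => //.
  exact: le_trans (normr_ge0 _) (hths (Ordinal d1p)).
have KM : s2 * gamma_max <= M by rewrite le_max lexx orbT.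
have s1M : s1 * theta_max <= M by rewrite le_max lexx.
have K0 : 0 <= s2 * gamma_max by rewrite mulr_ge0 //; lra.
have Ee : E = B * M + (s1 * theta_max) * (s2 * gamma_max).
  by rewrite /E /B sqrtrM ?ler0n // -/s1 -/s2; ring.
have E0 : 0 <= E by rewrite Ee addr_ge0 // mulr_ge0 //; lra.
have hz : forall i, norm2 (zvec phi (s i) (a0 i) (a1 i)) <= 2 * phi_max.
  move=> i; rewrite /zvec; apply: le_trans (norm2_add _ _ _ _) _.
  rewrite norm2_opp; have := hphi (s i) (a1 i); have := hphi (s i) (a0 i); lra.
have hps : forall x0, `|psi0 x0| ^+ 2 + norm2 (psi x0) ^+ 2 <= psi_max ^+ 2.
  move=> x0; rewrite real_normK ?num_real // norm2_sq.
  have h := hpsi x0.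
  have h0 : 0 <= psi0 x0 ^+ 2 + \sum_(j < d2) psi x0 0 j ^+ 2 by rewrite addr_ge0 ?sqr_ge0 ?sumsq_ge0.
  rewrite -(sqr_sqrtr h0) ler_sqr ?nnegrE ?sqrtr_ge0 //.
have hP0 : d2 = 0%N \/ 1 <= s2 * gamma_max.
  have [d20|d2p] := posnP d2; [by left|right].
  have : 1 <= s2 by rewrite /s2 -{1}sqrtr1 ler_sqrt ?ler0n // ler1n.
  nra.
have hPz : forall (v : 'rV[R]_d2), d2 = 0%N -> norm2 v = 0.
  move=> v e; rewrite /norm2 big1 ?sqrtr0 // => j _.
  by have := ltn_ord j; rewrite {2}e.
split.
- move=> th hth g g' [_ hg'].
  have hG : norm2 g' <= s2 * gamma_max := norm2_bound _ _ g' _ hg'.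
  have hts : norm2 theta_star <= s1 * theta_max := norm2_bound _ _ theta_star _ hths.
  have hT : norm2 th <= B + s1 * theta_max.
    have := norm2_add _ _ (th - theta_star) theta_star; rewrite subrK.
    rewrite -/B in hth; lra.
  rewrite /L !grad_theta.
  pose c := fun i : 'I_n =>
    (y i - logistic (sigmaG psi0 psi g (x i) * dotv th (zvec phi (s i) (a0 i) (a1 i))))
       * sigmaG psi0 psi g (x i)
    - (y i - logistic (sigmaG psi0 psi g' (x i) * dotv th (zvec phi (s i) (a0 i) (a1 i))))
       * sigmaG psi0 psi g' (x i).
  have -> : \row_j (- (n%:R)^-1 * \sum_(i < n) (y i - logistic (sigmaG psi0 psi g (x i) * dotv th (zvec phi (s i) (a0 i) (a1 i)))) * (sigmaG psi0 psi g (x i) * zvec phi (s i) (a0 i) (a1 i) 0 j))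
    - \row_j (- (n%:R)^-1 * \sum_(i < n) (y i - logistic (sigmaG psi0 psi g' (x i) * dotv th (zvec phi (s i) (a0 i) (a1 i)))) * (sigmaG psi0 psi g' (x i) * zvec phi (s i) (a0 i) (a1 i) 0 j))
    = \row_j (- (n%:R)^-1 * \sum_(i < n) c i * zvec phi (s i) (a0 i) (a1 i) 0 j).
    apply/matrixP => i j; rewrite !mxE -mulrBr -sumrB; congr (_ * _).
    by apply: eq_bigr => k _; rewrite /c; ring.
  apply: avg_bound => // i.
  set sg := sigmaG psi0 psi g (x i); set sg' := sigmaG psi0 psi g' (x i).
  set z := zvec phi (s i) (a0 i) (a1 i); set w := dotv th z.
  have hc : `|c i| <= `|sg - sg'| * (1 + `|sg'| * `|w| / 6) := SLy _ (y i) sg sg' w (hy i).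
  have h1 : `|sg - sg'| <= norm2 (g - g') * norm2 (psi (x i)).
    rewrite /sg /sg' /sigmaG.
    have -> : psi0 (x i) + dotv g (psi (x i)) - (psi0 (x i) + dotv g' (psi (x i)))
      = dotv (g - g') (psi (x i)) by rewrite dotvBl; ring.
    exact: dot_CS.
  have h2 : `|sg'| <= `|psi0 (x i)| + norm2 g' * norm2 (psi (x i)).
    rewrite /sg' /sigmaG; apply: le_trans (ler_normD _ _) _; rewrite lerD2l; exact: dot_CS.
  have h3 : `|w| <= norm2 th * norm2 z := dot_CS _ _ _ _.
  have Z0 := norm2_ge0 _ _ z; have P0' := norm2_ge0 _ _ (psi (x i)).
  have T0 := norm2_ge0 _ _ th; have G0 := norm2_ge0 _ _ g'; have D0 := norm2_ge0 _ _ (g - g').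
  have hc2 : `|c i| <= norm2 (g - g') * norm2 (psi (x i)) *
      (1 + (`|psi0 (x i)| + norm2 g' * norm2 (psi (x i))) * (norm2 th * norm2 z) / 6).
    apply: le_trans hc _; apply: ler_pM.
    - exact: normr_ge0.
    - have : 0 <= `|sg'| * `|w| / 6 by rewrite divr_ge0 // mulr_ge0.
      lra.
    - exact: h1.
    - rewrite lerD2l; apply: ler_wpM2r; first by rewrite invr_ge0.
      by apply: ler_pM.
  rewrite Mte.
  apply: le_trans (fin1 _ _ _ _ _ _ _ _ _ _ Ph0 P0' (normr_ge0 _) (hps (x i)) Ps0 Z0 (hz i) T0 G0 _ E0 D0).
    by apply: ler_wpM2r.
  case: hP0 => [d20|K1]; first by left; apply: hPz.
  right; rewrite Ee; exact: (condE1 _ _ _ _ _ _ _ B0 s1t0 K1 KM T0 hT G0 hG).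
- move=> g hg th th' hth'.
  have hT : norm2 th' <= s1 * theta_max := norm2_bound _ _ th' _ hth'.
  have hgs' : norm2 gamma_star <= s2 * gamma_max := norm2_bound _ _ gamma_star _ hgs.
  have hH : norm2 g <= B + s2 * gamma_max.
    have := norm2_add _ _ (g - gamma_star) gamma_star; rewrite subrK.
    rewrite -/B in hg; lra.
  rewrite /L !grad_gamma.
  pose c := fun i : 'I_n =>
    (y i - logistic (dotv th (zvec phi (s i) (a0 i) (a1 i)) * sigmaG psi0 psi g (x i)))
       * dotv th (zvec phi (s i) (a0 i) (a1 i))
    - (y i - logistic (dotv th' (zvec phi (s i) (a0 i) (a1 i)) * sigmaG psi0 psi g (x i)))
       * dotv th' (zvec phi (s i) (a0 i) (a1 i)).
  have -> : \row_j (- (n%:R)^-1 * \sum_(i < n) (y i - logistic (sigmaG psi0 psi g (x i) * dotv th (zvec phi (s i) (a0 i) (a1 i)))) * (psi (x i) 0 j * dotv th (zvec phi (s i) (a0 i) (a1 i))))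
    - \row_j (- (n%:R)^-1 * \sum_(i < n) (y i - logistic (sigmaG psi0 psi g (x i) * dotv th' (zvec phi (s i) (a0 i) (a1 i)))) * (psi (x i) 0 j * dotv th' (zvec phi (s i) (a0 i) (a1 i))))
    = \row_j (- (n%:R)^-1 * \sum_(i < n) c i * psi (x i) 0 j).
    apply/matrixP => i j; rewrite !mxE -mulrBr -sumrB; congr (_ * _).
    apply: eq_bigr => k _; rewrite /c.
    rewrite (mulrC (dotv th _)) (mulrC (dotv th' _)); ring.
  apply: avg_bound => // i.
  set sg := sigmaG psi0 psi g (x i).
  set z := zvec phi (s i) (a0 i) (a1 i); set w := dotv th z; set w' := dotv th' z.
  have hc : `|c i| <= `|w - w'| * (1 + `|w'| * `|sg| / 6) := SLy _ (y i) w w' sg (hy i).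
  have h1 : `|w - w'| <= norm2 (th - th') * norm2 z.
    by rewrite /w /w' -dotvBl; exact: dot_CS.
  have h2 : `|sg| <= `|psi0 (x i)| + norm2 g * norm2 (psi (x i)).
    rewrite /sg /sigmaG; apply: le_trans (ler_normD _ _) _; rewrite lerD2l; exact: dot_CS.
  have h3 : `|w'| <= norm2 th' * norm2 z := dot_CS _ _ _ _.
  have Z0 := norm2_ge0 _ _ z; have P0' := norm2_ge0 _ _ (psi (x i)).
  have T0 := norm2_ge0 _ _ th'; have G0 := norm2_ge0 _ _ g; have D0 := norm2_ge0 _ _ (th - th').
  have hc2 : `|c i| <= norm2 (th - th') * norm2 z *
      (1 + (norm2 th' * norm2 z) * (`|psi0 (x i)| + norm2 g * norm2 (psi (x i))) / 6).
    apply: le_trans hc _; apply: ler_pM.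
    - exact: normr_ge0.
    - have : 0 <= `|w'| * `|sg| / 6 by rewrite divr_ge0 // mulr_ge0.
      lra.
    - exact: h1.
    - rewrite lerD2l; apply: ler_wpM2r; first by rewrite invr_ge0.
      by apply: ler_pM.
  rewrite Mte.
  apply: le_trans (fin1 _ _ _ _ _ _ _ _ _ _ Ph0 P0' (normr_ge0 _) (hps (x i)) Ps0 Z0 (hz i) T0 G0 _ E0 D0).
    have := ler_wpM2r P0' hc2.
    move=> h; apply: le_trans h _; rewrite le_eqVlt; apply/orP; left; apply/eqP; ring.
  case: hP0 => [d20|K1]; first by left; apply: hPz.
  right; rewrite Ee; exact: (condE2 _ _ _ _ _ _ _ B0 s1t0 K1 s1M T0 hT G0 hH KM).
Qed.
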